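(* Let $d,D\ge 1$ and $n=2t+l$ with $t,l\ge 1$ integers. Fix any diagonal $\Omega=\mathrm{diag}(\omega_1,\dots,\omega_D)$ with $(\omega_i)$ a probability vector. For $(U,V,W,\Lambda)\in X:=U(dD)\times U(D)\times U(D)\times[0,1]^D$ (identifying $\Lambda\in[0,1]^D$ with the diagonal matrix it defines) let $$\rho_l(U,V,W,\Lambda,\Omega)=\mathrm{tr}_{A,B_1,\dots,B_t,B_{t+l+1},\dots,B_n}\Big(V\Lambda V^\dagger\, U_{A,B_1}\cdots U_{A,B_n}\big(W\Omega W^\dagger\otimes(|0\rangle\langle 0|)^{\otimes n}\big)U_{A,B_n}^\dagger\cdots U_{A,B_1}^\dagger\Big),$$ and define $f(U,V,W,\Lambda)=(\mathrm{tr}\,\rho_l(U,V,W,\Lambda,\Omega))^2$ and $g(U,V,W,\Lambda)=\mathrm{tr}\,\rho_l^2(U,V,W,\Lambda,\Omega)$. Equip $X$ with the metric $$d_1\big((U,V,W,\Lambda),(U',V',W',\Lambda')\big)=\|U-U'\|_2+\|V-V'\|_2+\|W-W'\|_2+\|\Lambda-\Lambda'\|_\infty.$$ Then the Lipschitz constants of both $f$ and $g$ with respect to $d_1$ are at most $4n+10$.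
   Context: $H_A\cong\mathbb{C}^D$ and $H_{B_1},\dots,H_{B_n}\cong\mathbb{C}^d$; $U_{A,B_i}$ denotes $U$ acting on $H_A\otimes H_{B_i}$ and as the identity elsewhere; $V\Lambda V^\dagger$ acts on $H_A$; $|0\rangle$ is a fixed unit vector in $\mathbb{C}^d$. $\|\cdot\|_2$ is the Hilbert–Schmidt norm and $\|\cdot\|_\infty$ is the operator norm (for diagonal $\Lambda$, the maximum absolute entry). *)

(* Defs.v *)
From mathcomp Require Import all_boot all_order all_algebra.
From mathcomp Require Import complex reals spectral.
Set Implicit Arguments. Unset Strict Implicit. Unset Printing Implicit Defensive.
Import Order.TTheory GRing.Theory Num.Theory.
Local Open Scope ring_scope.
Local Open Scope sesquilinear_scope.

Section QChannel.
Variable R : realType.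
Local Notation C := R[i].

Definition op (T : finType) := T -> T -> C.
Definition opmul (T : finType) (A B : op T) : op T :=
  fun x y => \sum_(z : T) A x z * B z y.
Definition opadj (T : finType) (A : op T) : op T := fun x y => (A y x)^*.
Definition opid (T : finType) : op T := fun x y => (x == y)%:R.
Definition optr (T : finType) (A : op T) : C := \sum_(x : T) A x x.

Variables (D d n : nat).

(* Index type of H_A (x) H_{B_1} (x) ... (x) H_{B_n}:
   a pair (a, b) with a : 'I_D and b i : 'I_d the index of B_(i+1). *)
Definition Ifull := ('I_D * {ffun 'I_n -> 'I_d})%type.

Definition liftA (P : 'M[C]_D) : op Ifull :=
  fun x y => P x.1 y.1 * (x.2 == y.2)%:R.

(* U : 'M_(D*d) acting on H_A (x) H_B (index of (a,b) is mxvec_index a b);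
   U_{A,B_(i+1)} acts as U on H_A (x) H_{B_(i+1)} and as identity elsewhere. *)
Definition UAB (U : 'M[C]_(D * d)) (i : 'I_n) : op Ifull :=
  fun x y => U (mxvec_index x.1 (x.2 i)) (mxvec_index y.1 (y.2 i))
             * [forall j : 'I_n, (j != i) ==> (x.2 j == y.2 j)]%:R.

Definition Uchain (U : 'M[C]_(D * d)) : op Ifull :=
  foldr (@opmul _) (@opid _) [seq UAB U i | i <- enum 'I_n].

(* W Omega W^dagger (x) (|0><0|)^{(x) n}, with |0> = v *)
Definition input (W : 'M[C]_D) (omega : 'rV[C]_D) (v : 'cV[C]_d) : op Ifull :=
  fun x y => (W *m diag_mx omega *m W ^t*) x.1 y.1
             * \prod_(i : 'I_n) (v (x.2 i) 0 * (v (y.2 i) 0)^*).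

(* kept subsystems: B_(t+1), ..., B_(t+l), i.e. 0-based indices t <= i < t+l *)
Definition kept (t l : nat) (i : 'I_n) : bool := (t <= i < t + l)%N.
Definition Kidx (t l : nat) := {ffun {i : 'I_n | kept t l i} -> 'I_d}.
Definition restrK (t l : nat) (b : {ffun 'I_n -> 'I_d}) : Kidx t l :=
  [ffun i => b (val i)].

Definition full_op (U : 'M[C]_(D * d)) (V W : 'M[C]_D) (Lam omega : 'rV[C]_D)
  (v : 'cV[C]_d) : op Ifull :=
  opmul (liftA (V *m diag_mx Lam *m V ^t*))
        (opmul (Uchain U) (opmul (input W omega v) (opadj (Uchain U)))).

(* partial trace over A, B_1..B_t, B_(t+l+1)..B_n *)
Definition rho_l (t l : nat) (U : 'M[C]_(D * d)) (V W : 'M[C]_D)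
  (Lam omega : 'rV[C]_D) (v : 'cV[C]_d) : op (Kidx t l) :=
  fun c c' =>
    \sum_(x : Ifull) \sum_(y : Ifull | [&& x.1 == y.1, restrK t l x.2 == c,
                                         restrK t l y.2 == c' &
                                         [forall j : 'I_n, ~~ kept t l j ==> (x.2 j == y.2 j)]])
      full_op U V W Lam omega v x y.

Definition f_fun (t l : nat) (U : 'M[C]_(D * d)) (V W : 'M[C]_D)
  (Lam omega : 'rV[C]_D) (v : 'cV[C]_d) : C :=
  (optr (@rho_l t l U V W Lam omega v)) ^+ 2.
Definition g_fun (t l : nat) (U : 'M[C]_(D * d)) (V W : 'M[C]_D)
  (Lam omega : 'rV[C]_D) (v : 'cV[C]_d) : C :=
  optr (opmul (@rho_l t l U V W Lam omega v) (@rho_l t l U V W Lam omega v)).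

End QChannel.

Section Metric.
Variable R : realType.
Local Notation C := R[i].

Definition HSnorm (m k : nat) (A : 'M[C]_(m, k)) : C :=
  sqrtC (\sum_(i < m) \sum_(j < k) `|A i j| ^+ 2).
(* operator norm of a diagonal matrix diag(Lam): max absolute entry *)
Definition supnorm (m : nat) (Lam : 'rV[C]_m) : C :=
  \big[Num.max/0]_(i < m) `|Lam 0 i|.

Definition d1 (D d : nat) (U U' : 'M[C]_(D * d)) (V V' W W' : 'M[C]_D)
  (Lam Lam' : 'rV[C]_D) : C :=
  HSnorm (U - U') + HSnorm (V - V') + HSnorm (W - W') + supnorm (Lam - Lam').
End Metric.

(* Main.v *)
Require Import Defs.
From mathcomp Require Import all_boot all_order all_algebra.
From mathcomp Require Import complex reals spectral.
From mathcomp Require Import ring.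
Set Implicit Arguments. Unset Strict Implicit. Unset Printing Implicit Defensive.
Import Order.TTheory GRing.Theory Num.Theory.
Local Open Scope ring_scope.
Local Open Scope sesquilinear_scope.

Section Vec.
Variable R : realType.
Local Notation C := R[i].

Definition ip (T : finType) (a b : T -> C) : C := \sum_x a x * (b x)^*.
Definition nm2 (T : finType) (a : T -> C) : C := ip a a.
Definition nm (T : finType) (a : T -> C) : C := sqrtC (nm2 a).
Definition rowv (T : finType) (a : T -> C) : 'rV[C]_#|T| := \row_i a (enum_val i).

Lemma sum_enum (T : finType) (F : T -> C) : \sum_x F x = \sum_(i < #|T|) F (enum_val i).
Proof. by rewrite (reindex (fun i : 'I_#|T| => enum_val i)) //; exact: onW_bij (enum_val_bij T). Qed.

Lemma ipE (T : finType) (a b : T -> C) : ip a b = dotmx (rowv a) (rowv b).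
Proof.
rewrite dotmxE !mxE /ip sum_enum; apply: eq_bigr => i _; by rewrite !mxE.
Qed.

Lemma nm2_ge0 (T : finType) (a : T -> C) : 0 <= nm2 a.
Proof. by rewrite /nm2 /ip sumr_ge0 // => x _; rewrite mul_conjC_ge0. Qed.

Lemma nm2E (T : finType) (a : T -> C) : nm2 a = \sum_x `|a x| ^+ 2.
Proof. by apply: eq_bigr => x _; rewrite normCK. Qed.

Lemma nm_ge0 (T : finType) (a : T -> C) : 0 <= nm a.
Proof. by rewrite /nm sqrtC_ge0 nm2_ge0. Qed.

Lemma nmK (T : finType) (a : T -> C) : nm a ^+ 2 = nm2 a.
Proof. exact: sqrtCK. Qed.

Lemma CS (T : finType) (a b : T -> C) : `|ip a b| <= nm a * nm b.
Proof. by rewrite /nm /nm2 !ipE; exact: (CauchySchwarz_sqrt _ (rowv a) (rowv b)). Qed.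

Lemma rowvD (T : finType) (a b : T -> C) : rowv (fun x => a x + b x) = rowv a + rowv b.
Proof. by apply/rowP => i; rewrite !mxE. Qed.

Lemma nm_triangle (T : finType) (a b : T -> C) : nm (fun x => a x + b x) <= nm a + nm b.
Proof. by rewrite /nm /nm2 !ipE rowvD; exact: (triangle_lerif _ (rowv a) (rowv b)). Qed.

Lemma nm2Z (T : finType) (c : C) (a : T -> C) : nm2 (fun x => c * a x) = `|c| ^+ 2 * nm2 a.
Proof.
rewrite !nm2E mulr_sumr; apply: eq_bigr => x _; by rewrite normrM exprMn.
Qed.

Lemma nmZ (T : finType) (c : C) (a : T -> C) : nm (fun x => c * a x) = `|c| * nm a.
Proof.
by rewrite /nm nm2Z sqrtCM ?nnegrE ?exprn_ge0 ?nm2_ge0 // sqrCK.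
Qed.

Lemma eq_nm2 (T : finType) (a b : T -> C) : (forall x, a x = b x) -> nm2 a = nm2 b.
Proof. by move=> h; apply: eq_bigr => x _; rewrite h. Qed.
Lemma eq_nm (T : finType) (a b : T -> C) : (forall x, a x = b x) -> nm a = nm b.
Proof. by move=> h; rewrite /nm (eq_nm2 h). Qed.

Lemma nmN (T : finType) (a : T -> C) : nm (fun x => - a x) = nm a.
Proof.
by rewrite -(@eq_nm _ (fun x => -1 * a x)) ?nmZ ?normrN1 ?mul1r // => x; rewrite mulN1r.
Qed.

Lemma nm_subC (T : finType) (a b : T -> C) : nm (fun x => a x - b x) = nm (fun x => b x - a x).
Proof. by rewrite -nmN; apply: eq_nm => x; rewrite opprB. Qed.

Lemma nm0 (T : finType) : nm (fun _ : T => 0 : C) = 0.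
Proof. by rewrite /nm /nm2 /ip big1 ?sqrtC0 // => x _; rewrite mul0r. Qed.

Lemma nm_sum (T I : finType) (r : seq I) (P : pred I) (f : I -> T -> C) :
  nm (fun x => \sum_(k <- r | P k) f k x) <= \sum_(k <- r | P k) nm (f k).
Proof.
elim: r => [|k r IH].
  by rewrite big_nil (@eq_nm _ _ (fun _ => 0)) ?nm0 // => x; rewrite big_nil.
rewrite big_cons; case: ifP => Pk.
  rewrite (@eq_nm _ _ (fun x => f k x + \sum_(j <- r | P j) f j x)); last first.
    by move=> x; rewrite big_cons Pk.
  by apply: le_trans (nm_triangle _ _) _; rewrite lerD2l.
by rewrite (@eq_nm _ _ (fun x => \sum_(j <- r | P j) f j x)) // => x; rewrite big_cons Pk.
Qed.

Lemma nm_of_sq (T T' : finType) (a : T -> C) (b : T' -> C) (c : C) :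
  0 <= c -> nm2 a <= c ^+ 2 * nm2 b -> nm a <= c * nm b.
Proof.
move=> c0 h; rewrite /nm -(sqrCK c0) -sqrtCM ?nnegrE ?exprn_ge0 ?nm2_ge0 //.
by rewrite ler_sqrtC // nnegrE ?mulr_ge0 ?exprn_ge0 ?nm2_ge0.
Qed.

Lemma sq_of_nm (T T' : finType) (a : T -> C) (b : T' -> C) (c : C) :
  0 <= c -> nm a <= c * nm b -> nm2 a <= c ^+ 2 * nm2 b.
Proof.
move=> c0 h; rewrite -!nmK -exprMn ler_sqr // nnegrE ?mulr_ge0 ?nm_ge0 //.
Qed.

Definition app (T : finType) (A : T -> T -> C) (a : T -> C) : T -> C :=
  fun x => \sum_y A x y * a y.

Definition bnd (T : finType) (A : T -> T -> C) (c : C) :=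
  forall a : T -> C, nm (app A a) <= c * nm a.

Lemma appB (T : finType) (A : T -> T -> C) (a b : T -> C) x :
  app A (fun y => a y - b y) x = app A a x - app A b x.
Proof. by rewrite /app -sumrB; apply: eq_bigr => y _; rewrite mulrBr. Qed.

Lemma appBl (T : finType) (A B : T -> T -> C) (a : T -> C) x :
  app (fun x y => A x y - B x y) a x = app A a x - app B a x.
Proof. by rewrite /app -sumrB; apply: eq_bigr => y _; rewrite mulrBl. Qed.

Lemma appDl (T : finType) (A B : T -> T -> C) (a : T -> C) x :
  app (fun x y => A x y + B x y) a x = app A a x + app B a x.
Proof. by rewrite /app -big_split; apply: eq_bigr => y _; rewrite mulrDl. Qed.

Lemma appM (T : finType) (A B : T -> T -> C) (a : T -> C) x :
  app (opmul A B) a x = app A (app B a) x.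
Proof.
rewrite /app /opmul.
under eq_bigr do rewrite mulr_suml.
rewrite exchange_big /=; apply: eq_bigr => z _.
by rewrite mulr_sumr; apply: eq_bigr => y _; rewrite mulrA.
Qed.

Lemma app_id (T : finType) (a : T -> C) x : app (@opid R T) a x = a x.
Proof.
rewrite /app /opid (bigD1 x) //= eqxx mul1r big1 ?addr0 // => y /negPf.
by rewrite eq_sym => ->; rewrite mul0r.
Qed.

Lemma bnd_ext (T : finType) (A B : T -> T -> C) c :
  (forall x y, A x y = B x y) -> bnd A c -> bnd B c.
Proof.
move=> h bA a; rewrite -(@eq_nm _ (app A a)) //.
by move=> x; apply: eq_bigr => y _; rewrite h.
Qed.

Lemma bnd_add (T : finType) (A B : T -> T -> C) a b :
  bnd A a -> bnd B b -> bnd (fun x y => A x y + B x y) (a + b).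
Proof.
move=> hA hB v; rewrite (eq_nm (appDl A B v)); apply: le_trans (nm_triangle _ _) _.
by rewrite mulrDl lerD.
Qed.

Lemma bnd_mul (T : finType) (A B : T -> T -> C) a b :
  0 <= a -> bnd A a -> bnd B b -> bnd (opmul A B) (a * b).
Proof.
move=> a0 hA hB v; rewrite (eq_nm (appM A B v)); apply: le_trans (hA _) _.
by rewrite -mulrA ler_wpM2l.
Qed.

Lemma bnd_HS (T : finType) (A : T -> T -> C) :
  bnd A (sqrtC (\sum_x \sum_y `|A x y| ^+ 2)).
Proof.
move=> a; apply: nm_of_sq; first by rewrite sqrtC_ge0; apply: sumr_ge0 => x _; apply: sumr_ge0 => y _; rewrite exprn_ge0.
rewrite sqrtCK nm2E mulr_suml; apply: ler_sum => x _.
have -> : app A a x = ip (A x) (fun y => (a y)^*).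
  by apply: eq_bigr => y _; rewrite conjCK.
rewrite -(nm2E (A x)) (@eq_nm2 _ a (fun y => a y)) //.
have -> : nm2 a = nm2 (fun y => (a y)^*).
  by rewrite !nm2E; apply: eq_bigr => y _; rewrite norm_conjC.
rewrite -!nmK -exprMn ler_sqr ?nnegrE ?mulr_ge0 ?nm_ge0 ?normr_ge0 //.
exact: CS.
Qed.

Lemma bnd_unit (T : finType) (A : T -> T -> C) :
  (forall s1 s2, \sum_s (A s s1)^* * A s s2 = (s1 == s2)%:R) -> bnd A 1.
Proof.
move=> hA a; apply: nm_of_sq => //; rewrite expr1n mul1r le_eqVlt; apply/orP; left.
have key y1 y2 : \sum_x A x y1 * (A x y2)^* = (y1 == y2)%:R.
  have : (\sum_s (A s y1)^* * A s y2)^* = ((y1 == y2)%:R)^* by rewrite hA.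
  rewrite rmorph_sum conjC_nat => <-; apply: eq_bigr => x _.
  by rewrite rmorphM /= conjCK mulrC.
apply/eqP; rewrite /nm2 /ip /app.
transitivity (\sum_y1 \sum_y2 (a y1 * (a y2)^*) * (y1 == y2)%:R).
  under eq_bigr do rewrite rmorph_sum mulr_suml.
  rewrite exchange_big /=; apply: eq_bigr => y1 _.
  under eq_bigr do rewrite mulr_sumr.
  rewrite exchange_big /=; apply: eq_bigr => y2 _.
  rewrite -key mulr_sumr; apply: eq_bigr => x _; rewrite rmorphM /=; ring.
apply: eq_bigr => y1 _; rewrite (bigD1 y1) //= eqxx mulr1 big1 ?addr0 // => y2.
by rewrite eq_sym => /negPf ->; rewrite mulr0.
Qed.

Lemma bnd_diag (T : finType) (lam : T -> C) c :
  0 <= c -> (forall s, `|lam s| <= c) -> bnd (fun s s' => lam s * (s == s')%:R) c.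
Proof.
move=> c0 hl a; apply: nm_of_sq => //; rewrite !nm2E mulr_sumr; apply: ler_sum => x _.
have -> : app (fun s s' => lam s * (s == s')%:R) a x = lam x * a x.
  rewrite /app (bigD1 x) //= eqxx mulr1 big1 ?addr0 // => y.
  by rewrite eq_sym => /negPf ->; rewrite mulr0 mul0r.
by rewrite normrM exprMn ler_wpM2r ?exprn_ge0 // ler_sqr ?nnegrE.
Qed.

Lemma sum_pair (S Q : finType) (F : S * Q -> C) :
  \sum_x F x = \sum_s \sum_q F (s, q).
Proof. by rewrite pair_bigA; apply: eq_bigr => -[]. Qed.

Section Split.
Variables (T S Q : finType) (sp : T -> S * Q) (spi : S * Q -> T).
Hypotheses (spK : cancel sp spi) (spiK : cancel spi sp).

Lemma sum_split (F : T -> C) : \sum_x F x = \sum_s \sum_q F (spi (s, q)).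
Proof.
rewrite -(sum_pair (fun p => F (spi p))) (reindex spi) //; exists sp => y _; by [rewrite spiK | rewrite spK].
Qed.

Lemma bnd_lift (A : S -> S -> C) (M : T -> T -> C) c :
  (forall x y, M x y = A (sp x).1 (sp y).1 * ((sp x).2 == (sp y).2)%:R) ->
  0 <= c -> bnd A c -> bnd M c.
Proof.
move=> hM c0 hA a; apply: nm_of_sq => //.
pose b (q : Q) := fun s => a (spi (s, q)).
have happ x : app M a x = app A (b (sp x).2) (sp x).1.
  rewrite /app sum_split; apply: eq_bigr => s _.
  rewrite (bigD1 (sp x).2) //= big1 ?addr0.
    by rewrite hM spiK eqxx mulr1.
  by move=> q nq; rewrite hM spiK /= eq_sym (negPf nq) mulr0 mul0r.
rewrite /nm2 /ip sum_split (sum_split (fun x => a x * (a x)^*)).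
rewrite [X in X <= _]exchange_big [X in _ <= _ * X]exchange_big /= mulr_sumr.
apply: ler_sum => q _.
under eq_bigr do rewrite happ spiK /=.
exact: (sq_of_nm c0 (hA (b q))).
Qed.
End Split.
End Vec.

Section Outer.
Variable R : realType.
Local Notation C := R[i].
Variables (T K : finType) (w : K -> C) (a b : K -> T -> C).

Lemma opmul_outer (A B : T -> T -> C) :
  (forall x y, B x y = \sum_k w k * (a k x * (b k y)^*)) ->
  forall x y, opmul A B x y = \sum_k w k * (app A (a k) x * (b k y)^*).
Proof.
move=> hB x y; rewrite /opmul.
under eq_bigr do rewrite hB mulr_sumr.
rewrite exchange_big /=; apply: eq_bigr => k _.
rewrite /app mulr_suml mulr_sumr; apply: eq_bigr => z _; ring.
Qed.

Lemma opmul_outer_adj (A B : T -> T -> C) :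
  (forall x y, B x y = \sum_k w k * (a k x * (b k y)^*)) ->
  forall x y, opmul B (opadj A) x y = \sum_k w k * (a k x * (app A (b k) y)^*).
Proof.
move=> hB x y; rewrite /opmul /opadj.
under eq_bigr do rewrite hB mulr_suml.
rewrite exchange_big /=; apply: eq_bigr => k _.
rewrite /app rmorph_sum mulr_sumr mulr_sumr; apply: eq_bigr => z _.
rewrite rmorphM /=; ring.
Qed.
End Outer.

Section Prob.
Variable R : realType.
Local Notation C := R[i].
Variables (D d n : nat).
Local Notation T := (Ifull D d n).

Lemma forall_ffun (P : pred 'I_n) (f g : {ffun 'I_n -> 'I_d}) :
  [forall j, P j ==> (f j == g j)] =
  ([ffun j : {j : 'I_n | P j} => f (val j)] == [ffun j => g (val j)]).
Proof.
apply/forallP/eqP => [h | h j].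
  by apply/ffunP => -[j Pj]; rewrite !ffunE /=; apply/eqP; exact: (implyP (h j) Pj).
apply/implyP => Pj; move/ffunP: h => /(_ (exist _ j Pj)); rewrite !ffunE /= => ->.
by [].
Qed.

Definition mi (s : 'I_D * 'I_d) : 'I_(D * d) := mxvec_index s.1 s.2.

Lemma mi_inj : injective mi.
Proof. by move=> [a b] [a' b'] /cast_ord_inj/enum_rank_inj. Qed.

Lemma sum_mi (F : 'I_(D * d) -> C) : \sum_k F k = \sum_s F (mi s).
Proof.
rewrite (reindex mi) //; exists (fun k => enum_val (cast_ord (esym (mxvec_cast D d)) k)).
  by move=> [a b] _; rewrite /mi /mxvec_index cast_ordK enum_rankK.
by move=> k _; case/mxvec_indexP: k => a b; rewrite /mi cast_ordK enum_rankK.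
Qed.

Definition AU (U : 'M[C]_(D * d)) (s s' : 'I_D * 'I_d) : C := U (mi s) (mi s').

Definition Qi (i : 'I_n) := {ffun {j : 'I_n | j != i} -> 'I_d}.
Definition spu (i : 'I_n) (x : T) : ('I_D * 'I_d) * Qi i :=
  ((x.1, x.2 i), [ffun j => x.2 (val j)]).
Definition spiu (i : 'I_n) (p : ('I_D * 'I_d) * Qi i) : T :=
  (p.1.1, [ffun j => if (insub j : option {j0 : 'I_n | j0 != i}) is Some j' then p.2 j' else p.1.2]).
Arguments spu : clear implicits.
Arguments spiu : clear implicits.

Lemma spuK i : cancel (spu i) (spiu i).
Proof.
move=> [a b]; rewrite /spu /spiu /=; congr (_, _); apply/ffunP => j; rewrite !ffunE.
case: insubP => [j' _ <-|]; first by rewrite ffunE.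
by rewrite negbK => /eqP ->.
Qed.

Lemma spiuK i : cancel (spiu i) (spu i).
Proof.
move=> [[a b] q]; rewrite /spu /spiu /=; congr ((_, _), _).
  by rewrite ffunE insubF // eqxx.
apply/ffunP => j; rewrite !ffunE; case: j => j hj /=.
by rewrite insubT /=; congr (q _); apply: val_inj.
Qed.

Lemma UAB_form (U : 'M[C]_(D * d)) (i : 'I_n) (x y : T) :
  UAB U i x y = AU U (spu i x).1 (spu i y).1 * ((spu i x).2 == (spu i y).2)%:R.
Proof. by rewrite /UAB /AU /mi forall_ffun. Qed.

Lemma AU_unit (U : 'M[C]_(D * d)) : U \is unitarymx ->
  forall s1 s2, \sum_s (AU U s s1)^* * AU U s s2 = (s1 == s2)%:R.
Proof.
move=> hU s1 s2; rewrite -trmxC_unitary in hU.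
move/unitarymxP: hU; rewrite trmxCK => /matrixP /(_ (mi s1) (mi s2)).
rewrite !mxE (inj_eq mi_inj) => <-; rewrite sum_mi; apply: eq_bigr => s _.
by rewrite /AU !mxE.
Qed.

Lemma HS_AU (U : 'M[C]_(D * d)) :
  sqrtC (\sum_s \sum_s' `|AU U s s'| ^+ 2) = HSnorm U.
Proof.
rewrite /HSnorm sum_mi; congr sqrtC; apply: eq_bigr => s _; by rewrite sum_mi.
Qed.

Lemma HS_ge0 m k (A : 'M[C]_(m, k)) : 0 <= HSnorm A.
Proof.
by rewrite /HSnorm sqrtC_ge0; apply: sumr_ge0 => x _; apply: sumr_ge0 => y _; rewrite exprn_ge0.
Qed.

Lemma bnd_UAB (U : 'M[C]_(D * d)) (i : 'I_n) : U \is unitarymx -> bnd (UAB U i) 1.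
Proof.
move=> hU; apply: (bnd_lift (@spuK i) (@spiuK i) (A := AU U)) => //.
  exact: UAB_form.
exact: bnd_unit (AU_unit hU).
Qed.

Lemma UAB_B (U U' : 'M[C]_(D * d)) (i : 'I_n) x y :
  UAB U i x y - UAB U' i x y = UAB (U - U') i x y.
Proof. by rewrite /UAB !mxE mulrBl. Qed.

Lemma bnd_UABd (U U' : 'M[C]_(D * d)) (i : 'I_n) :
  bnd (fun x y => UAB U i x y - UAB U' i x y) (HSnorm (U - U')).
Proof.
apply: (bnd_lift (@spuK i) (@spiuK i) (A := AU (U - U'))); last 2 first.
- exact: HS_ge0.
- by rewrite -HS_AU; exact: bnd_HS.
by move=> x y; rewrite UAB_B UAB_form.
Qed.


Definition Ch (U : 'M[C]_(D * d)) (l : seq 'I_n) : op R T :=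
  foldr (@opmul R T) (@opid R T) [seq UAB U i | i <- l].

Lemma Ch_bnd (U : 'M[C]_(D * d)) : U \is unitarymx ->
  forall l (a : T -> C), nm (app (Ch U l) a) <= nm a.
Proof.
move=> hU; elim => [|i l IH] a.
  by rewrite (eq_nm (app_id a)).
rewrite (eq_nm (appM _ _ a)); apply: le_trans (bnd_UAB i hU _) _.
by rewrite mul1r IH.
Qed.

Lemma Ch_diff (U U' : 'M[C]_(D * d)) : U \is unitarymx -> U' \is unitarymx ->
  forall l (a : T -> C),
  nm (fun x => app (Ch U l) a x - app (Ch U' l) a x) <=
    (size l)%:R * HSnorm (U - U') * nm a.
Proof.
move=> hU hU'; elim => [|i l IH] a.
  rewrite (@eq_nm _ _ _ (fun _ => 0)) ?nm0 ?mul0r // => x.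
  by rewrite !app_id subrr.
pose b := app (Ch U l) a; pose b' := app (Ch U' l) a.
rewrite (@eq_nm _ _ _ (fun x => app (UAB U i) (fun y => b y - b' y) x +
                               app (fun x y => UAB U i x y - UAB U' i x y) b' x)); last first.
  by move=> x; rewrite /Ch /= !appM appB appBl addrA subrK.
apply: le_trans (nm_triangle _ _) _.
have h1 := bnd_UAB i hU (fun y => b y - b' y).
have h2 := bnd_UABd U U' i b'.
have h3 := Ch_bnd hU' l a.
rewrite /= -add1n natrD !mulrDl mul1r [X in _ <= X]addrC lerD //.
  by apply: le_trans h1 _; rewrite mul1r IH.
by apply: le_trans h2 _; rewrite ler_wpM2l // HS_ge0.
Qed.

Lemma prod_norm1 (v : 'cV[C]_d) : \sum_(i < d) `|v i 0| ^+ 2 = 1 ->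
  \sum_(b : {ffun 'I_n -> 'I_d}) \prod_j `|v (b j) 0| ^+ 2 = 1.
Proof.
move=> hv; rewrite -(bigA_distr_bigA (fun (j : 'I_n) (c : 'I_d) => `|v c 0| ^+ 2)).
by rewrite big1 // => j _; rewrite hv.
Qed.

Definition phi (v : 'cV[C]_d) (M : 'M[C]_D) (k : 'I_D) (x : T) : C :=
  M x.1 k * \prod_j v (x.2 j) 0.

Lemma nm2_phi (v : 'cV[C]_d) (M : 'M[C]_D) k : \sum_(i < d) `|v i 0| ^+ 2 = 1 ->
  nm2 (phi v M k) = \sum_a `|M a k| ^+ 2.
Proof.
move=> hv; rewrite nm2E sum_pair; apply: eq_bigr => a _.
rewrite -[RHS]mulr1 -(prod_norm1 hv) mulr_sumr; apply: eq_bigr => b _.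
by rewrite /phi normrM exprMn normr_prod prodrXl.
Qed.

Lemma phi_B (v : 'cV[C]_d) (M M' : 'M[C]_D) k x :
  phi v M k x - phi v M' k x = phi v (M - M') k x.
Proof. by rewrite /phi !mxE mulrBl. Qed.

Lemma nm_phi (v : 'cV[C]_d) (W : 'M[C]_D) k : \sum_(i < d) `|v i 0| ^+ 2 = 1 ->
  W \is unitarymx -> nm (phi v W k) = 1.
Proof.
move=> hv hW; rewrite /nm nm2_phi // -[RHS]sqrtC1; congr sqrtC.
rewrite -trmxC_unitary in hW; move/unitarymxP: hW; rewrite trmxCK.
move/matrixP/(_ k k); rewrite !mxE eqxx /= => h; apply: (etrans _ h).
by apply: eq_bigr => a _; rewrite !mxE normCK mulrC.
Qed.

Lemma nm_phiB (v : 'cV[C]_d) (W W' : 'M[C]_D) k : \sum_(i < d) `|v i 0| ^+ 2 = 1 ->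
  nm (fun x => phi v W k x - phi v W' k x) <= HSnorm (W - W').
Proof.
move=> hv; rewrite (eq_nm (phi_B v W W' k)) /nm nm2_phi // /HSnorm.
rewrite ler_sqrtC ?nnegrE; last 2 first.
- by apply: sumr_ge0 => a _; rewrite exprn_ge0.
- by apply: sumr_ge0 => a _; apply: sumr_ge0 => b _; rewrite exprn_ge0.
apply: ler_sum => a _; rewrite (bigD1 k) //= lerDl.
by apply: sumr_ge0 => b _; rewrite exprn_ge0.
Qed.

Definition bndm (A : 'M[C]_D) c := bnd (fun i j => A i j) c.

Lemma bndm_mul (A B : 'M[C]_D) a b : 0 <= a -> bndm A a -> bndm B b -> bndm (A *m B) (a * b).
Proof.
move=> a0 hA hB; apply: (bnd_ext (A := opmul (fun i j => A i j) (fun i j => B i j))).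
  by move=> x y; rewrite mxE.
exact: bnd_mul.
Qed.

Lemma bndm_add (A B : 'M[C]_D) a b : bndm A a -> bndm B b -> bndm (A + B) (a + b).
Proof.
move=> hA hB; apply: (bnd_ext (A := fun i j => A i j + B i j)).
  by move=> x y; rewrite mxE.
exact: bnd_add.
Qed.

Lemma bndm_unit (A : 'M[C]_D) : A ^t* *m A = 1%:M -> bndm A 1.
Proof.
move=> h; apply: bnd_unit => s1 s2; move/matrixP: h => /(_ s1 s2); rewrite !mxE => h.
by apply: (etrans _ h); apply: eq_bigr => s _; rewrite !mxE.
Qed.

Lemma bndm_V (V : 'M[C]_D) : V \is unitarymx -> bndm V 1.
Proof.
move=> hV; apply: bndm_unit; rewrite -trmxC_unitary in hV.
by move/unitarymxP: hV; rewrite trmxCK.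
Qed.

Lemma bndm_Vt (V : 'M[C]_D) : V \is unitarymx -> bndm (V ^t*) 1.
Proof. by move=> hV; apply: bndm_unit; rewrite trmxCK; apply/unitarymxP. Qed.

Lemma bndm_diag (L : 'rV[C]_D) c : 0 <= c -> (forall i, `|L 0 i| <= c) -> bndm (diag_mx L) c.
Proof.
move=> c0 hL; apply: (bnd_ext (A := fun s s' => L 0 s * (s == s')%:R)).
  by move=> x y; rewrite mxE mulr_natr.
exact: bnd_diag.
Qed.

Lemma bndm_HS (A : 'M[C]_D) : bndm A (HSnorm A).
Proof. exact: bnd_HS. Qed.

Lemma bndm_HSt (A : 'M[C]_D) : bndm (A ^t*) (HSnorm A).
Proof.
have := bnd_HS (fun i j => (A ^t*) i j); congr bnd; rewrite /HSnorm; congr sqrtC.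
rewrite exchange_big /=; apply: eq_bigr => i _; apply: eq_bigr => j _.
by rewrite !mxE norm_conjC.
Qed.

Lemma bnd_liftA (A : 'M[C]_D) c : 0 <= c -> bndm A c -> bnd (@liftA R D d n A) c.
Proof.
move=> c0 hA; apply: (@bnd_lift R T 'I_D {ffun 'I_n -> 'I_d} (fun x => x) (fun x => x) (fun x => erefl) (fun x => erefl) (fun i j => A i j)) => //.
Qed.

Lemma liftA_B (A B : 'M[C]_D) x y :
  @liftA R D d n A x y - @liftA R D d n B x y = @liftA R D d n (A - B) x y.
Proof. by rewrite /liftA !mxE mulrBl. Qed.

Definition Pm (V : 'M[C]_D) (L : 'rV[C]_D) := V *m diag_mx L *m V ^t*.

Lemma bndm_P (V : 'M[C]_D) (L : 'rV[C]_D) : V \is unitarymx ->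
  (forall i, 0 <= L 0 i <= 1) -> bndm (Pm V L) 1.
Proof.
move=> hV hL; suff : bndm (Pm V L) (1 * 1 * 1) by rewrite !mulr1.
rewrite /Pm; apply: bndm_mul; [by rewrite mulr1 | | exact: bndm_Vt].
apply: bndm_mul => //; first exact: bndm_V.
apply: bndm_diag => // i; have /andP[h0 h1] := hL i; by rewrite ger0_norm.
Qed.

Lemma bigmax_prop (F : 'I_D -> C) (r : seq 'I_D) : (forall j, 0 <= F j) ->
  let m := \big[Num.max/0]_(j <- r) F j in
  [/\ m \is Num.real, 0 <= m & forall i, i \in r -> F i <= m].
Proof.
move=> F0; elim: r => [|j r [IH1 IH2 IH3]] /=; first by rewrite big_nil.
rewrite big_cons.
have Fr : F j \is Num.real by apply: ger0_real.
have cmp : F j >=< \big[Num.max/0]_(j <- r) F j by apply: real_comparable.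
split.
- by rewrite comparable_maxEge //; case: ifP.
- by rewrite comparable_le_max // IH2 orbT.
- move=> i; rewrite inE => /orP [/eqP ->|hr]; rewrite comparable_le_max //.
    by rewrite lexx.
  by rewrite IH3 // orbT.
Qed.

Lemma supnorm_ge (L : 'rV[C]_D) i : `|L 0 i| <= supnorm L.
Proof.
have [_ _ h] := @bigmax_prop (fun j => `|L 0 j|) (index_enum 'I_D) (fun j => normr_ge0 _).
by apply: h; rewrite mem_index_enum.
Qed.

Lemma supnorm_ge0 (L : 'rV[C]_D) : 0 <= supnorm L.
Proof.
by have [_ h _] := @bigmax_prop (fun j => `|L 0 j|) (index_enum 'I_D) (fun j => normr_ge0 _).
Qed.

Lemma Pm_diff (V V' : 'M[C]_D) (L L' : 'rV[C]_D) :
  Pm V L - Pm V' L' = (V - V') *m diag_mx L *m V ^t* + V' *m diag_mx (L - L') *m V ^t*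
                      + V' *m diag_mx L' *m (V - V') ^t*.
Proof.
have e1 : (V - V') ^t* = V ^t* - V' ^t* by apply/matrixP => i j; rewrite !mxE rmorphB.
have e2 : diag_mx (L - L') = diag_mx L - diag_mx L'.
  by apply/matrixP => i j; rewrite !mxE mulrnBl.
rewrite e1 e2 /Pm !mulmxBl !mulmxBr !mulmxBl.
by rewrite !addrA !subrK.
Qed.

Lemma bndm_Pdiff (V V' : 'M[C]_D) (L L' : 'rV[C]_D) : V \is unitarymx -> V' \is unitarymx ->
  (forall i, 0 <= L 0 i <= 1) -> (forall i, 0 <= L' 0 i <= 1) ->
  bndm (Pm V L - Pm V' L') (2 * HSnorm (V - V') + supnorm (L - L')).
Proof.
move=> hV hV' hL hL'.
have -> : 2 * HSnorm (V - V') + supnorm (L - L') =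
  HSnorm (V - V') * 1 * 1 + 1 * supnorm (L - L') * 1 + 1 * 1 * HSnorm (V - V') by ring.
have dL (M : 'rV[C]_D) : (forall i, 0 <= M 0 i <= 1) -> bndm (diag_mx M) 1.
  move=> hM; apply: bndm_diag => // i; have /andP[h0 h1] := hM i; by rewrite ger0_norm.
rewrite Pm_diff; apply: bndm_add; first apply: bndm_add.
- apply: bndm_mul; [by rewrite mulr_ge0 ?HS_ge0 | | exact: bndm_Vt].
  by apply: bndm_mul; [exact: HS_ge0 | exact: bndm_HS | exact: dL].
- apply: bndm_mul; [by rewrite mulr_ge0 ?supnorm_ge0 | | exact: bndm_Vt].
  apply: bndm_mul; [by [] | exact: bndm_V | ].
  apply: bndm_diag; [exact: supnorm_ge0 | exact: supnorm_ge].
- apply: bndm_mul; [by rewrite mulr_ge0 | | exact: bndm_HSt].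
  by apply: bndm_mul; [by [] | exact: bndm_V | exact: dL].
Qed.

Lemma input_outer (W : 'M[C]_D) (om : 'rV[C]_D) (v : 'cV[C]_d) (x y : T) :
  @input R D d n W om v x y = \sum_k om 0 k * (phi v W k x * (phi v W k y)^*).
Proof.
rewrite /input mul_mx_diag !mxE big_split /= mulr_suml.
apply: eq_bigr => k _; rewrite !mxE /phi rmorphM rmorph_prod /=; ring.
Qed.

Definition psi (U : 'M[C]_(D * d)) (W : 'M[C]_D) (v : 'cV[C]_d) (k : 'I_D) : T -> C :=
  app (@Uchain R D d n U) (phi v W k).

Definition alp (U : 'M[C]_(D * d)) (V W : 'M[C]_D) (L : 'rV[C]_D) (v : 'cV[C]_d) (k : 'I_D) : T -> C :=
  app (@liftA R D d n (Pm V L)) (psi U W v k).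

Lemma full_outer (U : 'M[C]_(D * d)) (V W : 'M[C]_D) (L om : 'rV[C]_D) (v : 'cV[C]_d) (x y : T) :
  @full_op R D d n U V W L om v x y =
  \sum_k om 0 k * (alp U V W L v k x * (psi U W v k y)^*).
Proof.
rewrite /full_op; apply: opmul_outer => {}x {}y; apply: opmul_outer => {}x {}y.
by apply: opmul_outer_adj => {}x {}y; apply: input_outer.
Qed.


Lemma ipBl (a a' b : T -> C) : ip a b - ip a' b = ip (fun x => a x - a' x) b.
Proof. by rewrite /ip -sumrB; apply: eq_bigr => x _; rewrite mulrBl. Qed.
Lemma ipBr (a b b' : T -> C) : ip a b - ip a b' = ip a (fun x => b x - b' x).
Proof. by rewrite /ip -sumrB; apply: eq_bigr => x _; rewrite rmorphB mulrBr. Qed.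

Section PerK.
Variables (U U' : 'M[C]_(D * d)) (V V' W W' : 'M[C]_D) (L L' : 'rV[C]_D) (v : 'cV[C]_d).
Hypotheses (hU : U \is unitarymx) (hU' : U' \is unitarymx)
  (hV : V \is unitarymx) (hV' : V' \is unitarymx)
  (hW : W \is unitarymx) (hW' : W' \is unitarymx)
  (hL : forall i, 0 <= L 0 i <= 1) (hL' : forall i, 0 <= L' 0 i <= 1)
  (hv : \sum_(i < d) `|v i 0| ^+ 2 = 1).

Lemma nm_psi (M : 'M[C]_(D * d)) (N : 'M[C]_D) k :
  M \is unitarymx -> N \is unitarymx -> nm (psi M N v k) <= 1.
Proof.
move=> hM hN; apply: le_trans (Ch_bnd hM _ _) _; by rewrite nm_phi.
Qed.

Lemma nm_alp (M : 'M[C]_(D * d)) (N N2 : 'M[C]_D) (L2 : 'rV[C]_D) k :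
  M \is unitarymx -> N \is unitarymx -> N2 \is unitarymx -> (forall i, 0 <= L2 0 i <= 1) ->
  nm (alp M N N2 L2 v k) <= 1.
Proof.
move=> hM hN hN2 hL2; apply: le_trans (bnd_liftA _ (bndm_P hN hL2) _) _ => //.
by rewrite mul1r nm_psi.
Qed.

Definition Dpsi := HSnorm (W - W') + n%:R * HSnorm (U - U').

Lemma nm_psiB k : nm (fun x => psi U W v k x - psi U' W' v k x) <= Dpsi.
Proof.
rewrite (@eq_nm _ _ _ (fun x => app (Uchain U) (fun y => phi v W k y - phi v W' k y) x +
      (app (Ch U (enum 'I_n)) (phi v W' k) x - app (Ch U' (enum 'I_n)) (phi v W' k) x))); last first.
  by move=> x; rewrite /psi appB addrA subrK.
apply: le_trans (nm_triangle _ _) _; apply: lerD.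
  by apply: le_trans (Ch_bnd hU _ _) _; apply: nm_phiB.
apply: le_trans (Ch_diff hU hU' _ _) _.
by rewrite size_enum_ord nm_phi // mulr1.
Qed.

Definition Dalp := Dpsi + (2 * HSnorm (V - V') + supnorm (L - L')).

Lemma nm_alpB k : nm (fun x => alp U V W L v k x - alp U' V' W' L' v k x) <= Dalp.
Proof.
rewrite (@eq_nm _ _ _ (fun x => app (@liftA R D d n (Pm V L)) (fun y => psi U W v k y - psi U' W' v k y) x +
      app (@liftA R D d n (Pm V L - Pm V' L')) (psi U' W' v k) x)); last first.
  move=> x; rewrite /alp appB.
  have -> : app (@liftA R D d n (Pm V L - Pm V' L')) (psi U' W' v k) x =
    app (@liftA R D d n (Pm V L)) (psi U' W' v k) x - app (@liftA R D d n (Pm V' L')) (psi U' W' v k) x.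
    by rewrite -appBl; apply: eq_bigr => y _; rewrite liftA_B.
  by rewrite addrA subrK.
apply: le_trans (nm_triangle _ _) _; apply: lerD.
  apply: le_trans (bnd_liftA _ (bndm_P hV hL) _) _ => //.
  by rewrite mul1r nm_psiB.
have c0 : 0 <= 2 * HSnorm (V - V') + supnorm (L - L').
  by rewrite addr_ge0 ?mulr_ge0 ?HS_ge0 ?supnorm_ge0.
apply: le_trans (bnd_liftA c0 (bndm_Pdiff hV hV' hL hL') _) _.
by rewrite ler_piMr // nm_psi.
Qed.

Definition Dtot := Dalp + Dpsi.

Lemma ip_diff k :
  `|ip (alp U V W L v k) (psi U W v k) - ip (alp U' V' W' L' v k) (psi U' W' v k)| <= Dtot.
Proof.
rewrite -(subrK (ip (alp U' V' W' L' v k) (psi U W v k)) (ip _ _)) -addrA ipBl ipBr.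
apply: le_trans (ler_normD _ _) _; apply: lerD.
  apply: le_trans (CS _ _) _.
  apply: le_trans (ler_wpM2l (nm_ge0 _) (nm_psi k hU hW)) _; rewrite mulr1; exact: nm_alpB.
apply: le_trans (CS _ _) _; rewrite -[X in _ <= X]mul1r.
apply: ler_pM; rewrite ?nm_ge0 ?nm_alp ?nm_psiB //.
Qed.

Lemma ip_le1 (M : 'M[C]_(D * d)) (N N2 : 'M[C]_D) (L2 : 'rV[C]_D) k :
  M \is unitarymx -> N \is unitarymx -> N2 \is unitarymx -> (forall i, 0 <= L2 0 i <= 1) ->
  `|ip (alp M N N2 L2 v k) (psi M N2 v k)| <= 1.
Proof.
move=> hM hN hN2 hL2; apply: le_trans (CS _ _) _; rewrite -[X in _ <= X]mul1r.
by apply: ler_pM; rewrite ?nm_ge0 ?nm_alp ?nm_psi.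
Qed.
End PerK.

Section Kept.
Variables (t l : nat) (z0 : 'I_d).
Local Notation KI := (Kidx d n t l).
Definition Env := ('I_D * {ffun {j : 'I_n | ~~ kept t l j} -> 'I_d})%type.

Definition spk (x : T) : KI * Env := (restrK t l x.2, (x.1, [ffun j => x.2 (val j)])).
Definition spik (p : KI * Env) : T :=
  (p.2.1, [ffun j => if (insub j : option {j0 : 'I_n | kept t l j0}) is Some jk then p.1 jk
                     else if (insub j : option {j0 : 'I_n | ~~ kept t l j0}) is Some jr then p.2.2 jr
                     else z0]).
Arguments spk : simpl never.
Arguments spik : simpl never.

Lemma spkK : cancel spk spik.
Proof.
move=> [a b]; rewrite /spk /spik /=; congr (_, _); apply/ffunP => j; rewrite !ffunE.
case: insubP => [jk _ <-|]; first by rewrite ffunE.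
by move=> hk; rewrite insubT /= ffunE.
Qed.

Lemma spikK : cancel spik spk.
Proof.
move=> [c [a q]]; rewrite /spk /spik /=; congr (_, (_, _)).
  apply/ffunP => -[j hj]; rewrite !ffunE /= insubT /=; congr (c _); exact: val_inj.
apply/ffunP => -[j hj]; rewrite !ffunE /= insubF; last by apply/negbTE.
by rewrite insubT /=; congr (q _); exact: val_inj.
Qed.

Lemma cond_spk (x y : T) (c c' : KI) :
  [&& x.1 == y.1, restrK t l x.2 == c, restrK t l y.2 == c' &
      [forall j : 'I_n, ~~ kept t l j ==> (x.2 j == y.2 j)]] =
  [&& (spk x).1 == c, (spk y).1 == c' & (spk x).2 == (spk y).2].
Proof.
rewrite /spk /= xpair_eqE (forall_ffun (fun j => ~~ kept t l j)).
by case: (x.1 == y.1); case: (restrK t l x.2 == c); case: (restrK t l y.2 == c').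
Qed.

Lemma sum_cond_in (F : T -> T -> C) (c c' : KI) (x : T) :
  \sum_(y : T) (if [&& x.1 == y.1, restrK t l x.2 == c, restrK t l y.2 == c' &
      [forall j : 'I_n, ~~ kept t l j ==> (x.2 j == y.2 j)]] then F x y else 0) =
  if (spk x).1 == c then F x (spik (c', (spk x).2)) else 0.
Proof.
rewrite (sum_split spkK spikK).
under eq_bigr do under eq_bigr do rewrite cond_spk spikK /=.
case: eqP => /= [_|_]; last by apply: big1 => s _; apply: big1.
rewrite (bigD1 c') //= [X in _ + X]big1 ?addr0; last first.
  by move=> s ns; apply: big1 => q _; rewrite (negPf ns).
rewrite (bigD1 (spk x).2) //= [X in _ + X]big1 ?addr0 ?eqxx //.
by move=> q nq; rewrite eq_sym (negPf nq) andbF.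
Qed.

Lemma sum_cond (F : T -> T -> C) (c c' : KI) :
  \sum_(x : T) \sum_(y : T | [&& x.1 == y.1, restrK t l x.2 == c, restrK t l y.2 == c' &
      [forall j : 'I_n, ~~ kept t l j ==> (x.2 j == y.2 j)]]) F x y =
  \sum_(e : Env) F (spik (c, e)) (spik (c', e)).
Proof.
under eq_bigr do rewrite big_mkcond sum_cond_in.
rewrite (sum_split spkK spikK).
under eq_bigr do under eq_bigr do rewrite spikK.
rewrite (bigD1 c) //= [X in _ + X]big1 ?addr0; last first.
  by move=> s ns; apply: big1 => q _; rewrite (negPf ns).
by apply: eq_bigr => e _; rewrite eqxx.
Qed.

Definition G (a b : T -> C) (c c' : KI) : C :=
  \sum_(e : Env) a (spik (c, e)) * (b (spik (c', e)))^*.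

Lemma rho_formula (U : 'M[C]_(D * d)) (V W : 'M[C]_D) (L om : 'rV[C]_D) (v : 'cV[C]_d) c c' :
  @rho_l R D d n t l U V W L om v c c' =
  \sum_k om 0 k * G (alp U V W L v k) (psi U W v k) c c'.
Proof.
rewrite /rho_l.
under eq_bigr do under eq_bigr do rewrite full_outer.
rewrite sum_cond exchange_big /=; apply: eq_bigr => k _.
by rewrite /G mulr_sumr.
Qed.

Lemma ip_split (a b : T -> C) : ip a b = \sum_(c : KI) G a b c c.
Proof. by rewrite /ip (sum_split spkK spikK). Qed.

Lemma tr_formula (U : 'M[C]_(D * d)) (V W : 'M[C]_D) (L om : 'rV[C]_D) (v : 'cV[C]_d) :
  optr (@rho_l R D d n t l U V W L om v) =
  \sum_k om 0 k * ip (alp U V W L v k) (psi U W v k).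
Proof.
rewrite /optr; under eq_bigr do rewrite rho_formula.
rewrite exchange_big /=; apply: eq_bigr => k _.
by rewrite ip_split mulr_sumr.
Qed.

Definition hs (A : KI -> KI -> C) := nm (fun p : KI * KI => A p.1 p.2).

Lemma hs_G (a b : T -> C) : hs (G a b) <= nm a * nm b.
Proof.
have h0 : 0 <= nm a * nm b by rewrite mulr_ge0 ?nm_ge0.
rewrite /hs /nm -(sqrCK h0) ler_sqrtC ?nnegrE ?nm2_ge0 ?exprn_ge0 //.
rewrite exprMn !nmK.
have -> : nm2 a = \sum_(c : KI) nm2 (fun e => a (spik (c, e))).
  by rewrite /nm2 ip_split.
have -> : nm2 b = \sum_(c : KI) nm2 (fun e => b (spik (c, e))).
  by rewrite /nm2 ip_split.
rewrite nm2E sum_pair mulr_suml; apply: ler_sum => c _.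
rewrite mulr_sumr; apply: ler_sum => c' _ /=.
have := CS (fun e => a (spik (c, e))) (fun e => b (spik (c', e))).
rewrite -!nmK -exprMn => h; rewrite ler_sqr ?nnegrE ?mulr_ge0 ?nm_ge0 //.
Qed.

Lemma G_Bl (a a' b : T -> C) c c' :
  G a b c c' - G a' b c c' = G (fun x => a x - a' x) b c c'.
Proof. by rewrite /G -sumrB; apply: eq_bigr => e _; rewrite mulrBl. Qed.

Lemma G_Br (a b b' : T -> C) c c' :
  G a b c c' - G a b' c c' = G a (fun x => b x - b' x) c c'.
Proof. by rewrite /G -sumrB; apply: eq_bigr => e _; rewrite rmorphB mulrBr. Qed.

Lemma trp_bound (A B : KI -> KI -> C) :
  `|\sum_c \sum_z A c z * B z c| <= hs A * hs B.
Proof.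
have -> : \sum_c \sum_z A c z * B z c =
   ip (fun p : KI * KI => A p.1 p.2) (fun p => (B p.2 p.1)^*).
  by rewrite /ip sum_pair; apply: eq_bigr => c _; apply: eq_bigr => z _; rewrite conjCK.
apply: le_trans (CS _ _) _; rewrite ler_wpM2l ?nm_ge0 //.
rewrite /hs /nm le_eqVlt; apply/orP; left; apply/eqP; congr sqrtC.
rewrite !nm2E !sum_pair exchange_big /=; apply: eq_bigr => c _; apply: eq_bigr => z _.
by rewrite norm_conjC.
Qed.

Lemma hs_ext (A B : KI -> KI -> C) : (forall c c', A c c' = B c c') -> hs A = hs B.
Proof. by move=> h; apply: eq_nm => p; rewrite h. Qed.

Section Final.
Variables (om : 'rV[C]_D).
Hypotheses (hom0 : forall i, 0 <= om 0 i) (hom1 : \sum_(i < D) om 0 i = 1).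

Lemma wsum_norm (z : 'I_D -> C) B : (forall k, `|z k| <= B) -> `|\sum_k om 0 k * z k| <= B.
Proof.
move=> hz; apply: le_trans (ler_norm_sum _ _ _) _.
rewrite -[X in _ <= X]mul1r -hom1 mulr_suml; apply: ler_sum => k _.
by rewrite normrM ger0_norm // ler_wpM2l.
Qed.

Lemma hs_wsum (X : 'I_D -> KI -> KI -> C) B : (forall k, hs (X k) <= B) ->
  hs (fun c c' => \sum_k om 0 k * X k c c') <= B.
Proof.
move=> hX; apply: le_trans (nm_sum _ _ (fun k p => om 0 k * X k p.1 p.2)) _.
rewrite -[X in _ <= X]mul1r -hom1 mulr_suml; apply: ler_sum => k _.
rewrite (nmZ (om 0 k) (fun p : KI * KI => X k p.1 p.2)) ger0_norm //. apply: ler_wpM2l; [exact: hom0 | exact: hX].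
Qed.

Variables (U U' : 'M[C]_(D * d)) (V V' W W' : 'M[C]_D) (L L' : 'rV[C]_D) (v : 'cV[C]_d).
Hypotheses (hU : U \is unitarymx) (hU' : U' \is unitarymx)
  (hV : V \is unitarymx) (hV' : V' \is unitarymx)
  (hW : W \is unitarymx) (hW' : W' \is unitarymx)
  (hL : forall i, 0 <= L 0 i <= 1) (hL' : forall i, 0 <= L' 0 i <= 1)
  (hv : \sum_(i < d) `|v i 0| ^+ 2 = 1).

Local Notation rho := (@rho_l R D d n t l U V W L om v).
Local Notation rho' := (@rho_l R D d n t l U' V' W' L' om v).
Local Notation Dt := (Dtot U U' V V' W W' L L').

Lemma tr_le1 (M : 'M[C]_(D * d)) (N N2 : 'M[C]_D) (L2 : 'rV[C]_D) :
  M \is unitarymx -> N \is unitarymx -> N2 \is unitarymx -> (forall i, 0 <= L2 0 i <= 1) ->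
  `|optr (@rho_l R D d n t l M N N2 L2 om v)| <= 1.
Proof.
move=> hM hN hN2 hL2; rewrite tr_formula; apply: wsum_norm => k; exact: ip_le1.
Qed.

Lemma tr_diff : `|optr rho - optr rho'| <= Dt.
Proof.
rewrite !tr_formula -sumrB.
under eq_bigr do rewrite -mulrBr.
by apply: wsum_norm => k; apply: ip_diff.
Qed.

Lemma f_bound : `|f_fun n t l U V W L om v - f_fun n t l U' V' W' L' om v| <= 2 * Dt.
Proof.
rewrite /f_fun subr_sqr normrM mulrC.
apply: ler_pM; rewrite ?normr_ge0 ?tr_diff //.
apply: le_trans (ler_normD _ _) _.
have -> : (2 : C) = 1 + 1 by rewrite -natr1.
by rewrite lerD ?tr_le1.
Qed.

Lemma hs_rho_le1 (M : 'M[C]_(D * d)) (N N2 : 'M[C]_D) (L2 : 'rV[C]_D) :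
  M \is unitarymx -> N \is unitarymx -> N2 \is unitarymx -> (forall i, 0 <= L2 0 i <= 1) ->
  hs (@rho_l R D d n t l M N N2 L2 om v) <= 1.
Proof.
move=> hM hN hN2 hL2; rewrite (hs_ext (rho_formula _ _ _ _ _ _)).
apply: hs_wsum => k; apply: le_trans (hs_G _ _) _; rewrite -[X in _ <= X]mul1r.
by apply: ler_pM; rewrite ?nm_ge0 ?nm_alp ?nm_psi.
Qed.

Lemma hs_rhoB : hs (fun c c' => rho c c' - rho' c c') <= Dt.
Proof.
rewrite (@hs_ext _ (fun c c' => \sum_k om 0 k *
   (G (fun x => alp U V W L v k x - alp U' V' W' L' v k x) (psi U W v k) c c' +
    G (alp U' V' W' L' v k) (fun x => psi U W v k x - psi U' W' v k x) c c'))); last first.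
  move=> c c'; rewrite !rho_formula -sumrB; apply: eq_bigr => k _.
  by rewrite -mulrBr -G_Bl -G_Br addrA subrK.
apply: hs_wsum => k.
apply: le_trans (nm_triangle (fun p : KI * KI => G (fun x => alp U V W L v k x - alp U' V' W' L' v k x) (psi U W v k) p.1 p.2) (fun p : KI * KI => G (alp U' V' W' L' v k) (fun x => psi U W v k x - psi U' W' v k x) p.1 p.2)) _.
apply: lerD.
  apply: le_trans (hs_G _ _) _.
  apply: le_trans (ler_wpM2l (nm_ge0 _) (nm_psi hv k hU hW)) _; rewrite mulr1; exact: (nm_alpB W hU hU' hV hV' hW' hL hL' hv k).
apply: le_trans (hs_G _ _) _; rewrite -[X in _ <= X]mul1r.
apply: ler_pM; rewrite ?nm_ge0 ?nm_alp ?nm_psiB //.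
Qed.

Lemma g_bound : `|g_fun n t l U V W L om v - g_fun n t l U' V' W' L' om v| <= 2 * Dt.
Proof.
have -> : g_fun n t l U V W L om v - g_fun n t l U' V' W' L' om v =
  \sum_c \sum_z (rho c z - rho' c z) * rho z c +
  \sum_c \sum_z rho' c z * (rho z c - rho' z c).
  rewrite /g_fun /optr /opmul -big_split -sumrB; apply: eq_bigr => c _.
  rewrite -big_split -sumrB; apply: eq_bigr => z _ /=; ring.
apply: le_trans (ler_normD _ _) _; rewrite mulr2n mulrDl mul1r lerD //.
  apply: le_trans (trp_bound (fun c z => rho c z - rho' c z) rho) _.
  apply: le_trans (ler_wpM2l (nm_ge0 _) (hs_rho_le1 hU hV hW hL)) _.
  by rewrite mulr1 hs_rhoB.
apply: le_trans (trp_bound rho' (fun c z => rho c z - rho' c z)) _; rewrite -[X in _ <= X]mul1r.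
by apply: ler_pM; rewrite ?nm_ge0 ?hs_rho_le1 ?hs_rhoB.
Qed.
End Final.
End Kept.
End Prob.

Unset Implicit Arguments.
Theorem theorem7 (R : realType) (d D t l n : nat) :
  (1 <= d)%N -> (1 <= D)%N -> (1 <= t)%N -> (1 <= l)%N -> n = (2 * t + l)%N ->
  forall (omega : 'rV[R[i]]_D),
  (forall i, 0 <= omega 0 i) -> \sum_(i < D) omega 0 i = 1 ->
  forall (v : 'cV[R[i]]_d), \sum_(i < d) `|v i 0| ^+ 2 = 1 ->
  forall (U U' : 'M[R[i]]_(D * d)) (V V' W W' : 'M[R[i]]_D)
         (Lam Lam' : 'rV[R[i]]_D),
  U \is unitarymx -> U' \is unitarymx ->
  V \is unitarymx -> V' \is unitarymx ->
  W \is unitarymx -> W' \is unitarymx ->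
  (forall i, 0 <= Lam 0 i <= 1) -> (forall i, 0 <= Lam' 0 i <= 1) ->
  `|f_fun n t l U V W Lam omega v - f_fun n t l U' V' W' Lam' omega v|
     <= (4 * n + 10)%:R * d1 U U' V V' W W' Lam Lam'
  /\
  `|g_fun n t l U V W Lam omega v - g_fun n t l U' V' W' Lam' omega v|
     <= (4 * n + 10)%:R * d1 U U' V V' W W' Lam Lam'.
Proof.
move=> hd _ _ _ _ om hom0 hom1 v hv U U' V V' W W' L L' hU hU' hV hV' hW hW' hL hL'.
pose z0 : 'I_d := Ordinal hd.
have key : 2 * Dtot n U U' V V' W W' L L' <= (4 * n + 10)%:R * d1 U U' V V' W W' L L'.
  rewrite /Dtot /Dalp /Dpsi /d1.
  set u := HSnorm (U - U'); set a := HSnorm (V - V'); set w := HSnorm (W - W').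
  set b := supnorm (L - L').
  have u0 : 0 <= u by exact: HS_ge0.
  have a0 : 0 <= a by exact: HS_ge0.
  have w0 : 0 <= w by exact: HS_ge0.
  have b0 : 0 <= b by exact: supnorm_ge0.
  rewrite -subr_ge0.
  have -> : (4 * n + 10)%:R * (u + a + w + b) - 2 * (w + n%:R * u + (2 * a + b) + (w + n%:R * u)) =
    10 * u + (4 * n%:R + 6) * a + (4 * n%:R + 6) * w + (4 * n%:R + 8) * b.
    rewrite natrD natrM; ring.
  have n0 : 0 <= n%:R :> R[i] by exact: ler0n.
  by rewrite !addr_ge0 ?mulr_ge0 ?addr_ge0 ?mulr_ge0 ?ler0n.
split.
  apply: le_trans key; exact: (f_bound n t l z0 hom0 hom1 hU hU' hV hV' hW hW' hL hL' hv).
apply: le_trans key; exact: (g_bound n t l z0 hom0 hom1 hU hU' hV hV' hW hW' hL hL' hv).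
Qed.
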